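(* If $X$ is a topological space satisfying ${\sf S}_1(\mathcal{G}_K,\mathcal{G}_\Gamma)$, then $X$ is productively Lindel\''of, productively Menger, and productively Hurewicz.
   Context: All spaces are infinite ${\sf T}_1$ topological spaces. $\mathcal{G}_K$ is the family of all collections $\mathcal{U}$ of ${\sf G}_\delta$ subsets of $X$ with $X\notin\mathcal{U}$ such that each compact subset of $X$ is contained in some member of $\mathcal{U}$. $\mathcal{G}_\Gamma$ is the family of infinite collections $\mathcal{U}$ of ${\sf G}_\delta$ subsets of $X$ such that every infinite subcollection of $\mathcal{U}$ covers $X$. ${\sf S}_1(\mathcal{A},\mathcal{B})$: for each sequence $(A_n)$ of elements of $\mathcal{A}$ there are $B_n\in A_n$ with $\{B_n:n\in\mathbb{N}\}\in\mathcal{B}$. A space is Menger if for each sequence $(\mathcal{U}_n)$ of open covers there are finite $\mathcal{V}_n\subseteq\mathcal{U}_n$ with $\bigcup_n\mathcal{V}_n$ a cover; it is Hurewicz if for each sequence $(\mathcal{U}_n)$ of open covers there are finite $\mathcal{V}_n\subseteq\mathcal{U}_n$ such that each point belongs to $\bigcup\mathcal{V}_n$ for all but finitely many $n$. For a property ${\sf Q}$, $X$ is productively ${\sf Q}$ if $X\times Y$ has ${\sf Q}$ for every space $Y$ having ${\sf Q}$. *)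

(* Defs.v *)
From Stdlib Require Import List Arith.
Import ListNotations.

Definition set (T : Type) := T -> Prop.

Definition seteq {T : Type} (A B : set T) : Prop := forall x, A x <-> B x.

Definition is_topology {T : Type} (op : set T -> Prop) : Prop :=
  op (fun _ => True) /\
  op (fun _ => False) /\
  (forall U V, op U -> op V -> op (fun x => U x /\ V x)) /\
  (forall F : set T -> Prop, (forall U, F U -> op U) ->
     op (fun x => exists U, F U /\ U x)) /\
  (forall U V, seteq U V -> op U -> op V).

Definition T1_space {T : Type} (op : set T -> Prop) : Prop :=
  forall x y : T, x <> y -> exists U, op U /\ U x /\ ~ U y.

Definition infinite_type (T : Type) : Prop :=
  forall l : list T, exists x, ~ In x l.

Definition prod_open {T T' : Type} (op : set T -> Prop) (op' : set T' -> Prop)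
  (W : set (T * T')) : Prop :=
  forall p, W p -> exists U V, op U /\ op' V /\ U (fst p) /\ V (snd p) /\
    (forall a b, U a -> V b -> W (a, b)).

Definition Gdelta {T : Type} (op : set T -> Prop) (A : set T) : Prop :=
  exists U : nat -> set T, (forall n, op (U n)) /\ (forall x, A x <-> forall n, U n x).

Definition compact_subset {T : Type} (op : set T -> Prop) (K : set T) : Prop :=
  forall F : set T -> Prop, (forall U, F U -> op U) ->
    (forall x, K x -> exists U, F U /\ U x) ->
    exists l : list (set T), (forall U, In U l -> F U) /\
      (forall x, K x -> exists U, In U l /\ U x).

Definition covers {T : Type} (C : set T -> Prop) : Prop :=
  forall x : T, exists U, C U /\ U x.

Definition open_cover {T : Type} (op : set T -> Prop) (C : set T -> Prop) : Prop :=
  (forall U, C U -> op U) /\ covers C.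

Definition infinite_coll {T : Type} (C : set T -> Prop) : Prop :=
  forall l : list (set T), exists U, C U /\ forall V, In V l -> ~ seteq U V.

Definition in_GK {T : Type} (op : set T -> Prop) (C : set T -> Prop) : Prop :=
  (forall U, C U -> Gdelta op U) /\
  ~ (exists U, C U /\ seteq U (fun _ => True)) /\
  (forall K, compact_subset op K -> exists U, C U /\ forall x, K x -> U x).

Definition in_GGamma {T : Type} (op : set T -> Prop) (C : set T -> Prop) : Prop :=
  infinite_coll C /\
  (forall U, C U -> Gdelta op U) /\
  (forall D : set T -> Prop, (forall U, D U -> C U) -> infinite_coll D -> covers D).

Definition S1_GK_GGamma {T : Type} (op : set T -> Prop) : Prop :=
  forall A : nat -> (set T -> Prop), (forall n, in_GK op (A n)) ->
    exists B : nat -> set T, (forall n, A n (B n)) /\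
      in_GGamma op (fun U => exists n, seteq U (B n)).

Definition Lindelof {T : Type} (op : set T -> Prop) : Prop :=
  forall C, open_cover op C ->
    exists f : nat -> set T, (forall n, C (f n)) /\ forall x, exists n, f n x.

Definition Menger {T : Type} (op : set T -> Prop) : Prop :=
  forall C : nat -> (set T -> Prop), (forall n, open_cover op (C n)) ->
    exists V : nat -> list (set T), (forall n U, In U (V n) -> C n U) /\
      forall x, exists n U, In U (V n) /\ U x.

Definition Hurewicz {T : Type} (op : set T -> Prop) : Prop :=
  forall C : nat -> (set T -> Prop), (forall n, open_cover op (C n)) ->
    exists V : nat -> list (set T), (forall n U, In U (V n) -> C n U) /\
      forall x, exists N, forall n, N <= n -> exists U, In U (V n) /\ U x.

(* X is productively Q: X x Y has Q for every space Y (infinite T1, per the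
   paper's standing convention) having Q. *)
Definition productively
  (Q : forall T : Type, (set T -> Prop) -> Prop) {T : Type} (op : set T -> Prop) : Prop :=
  forall (T' : Type) (op' : set T' -> Prop),
    is_topology op' -> T1_space op' -> infinite_type T' ->
    Q T' op' -> Q (T * T')%type (prod_open op op').

(* Main.v *)
Require Import Defs.
From Stdlib Require Import List Arith Lia Cantor Classical ClassicalEpsilon.
Import ListNotations.

Lemma my_choice {A B : Type} (P : A -> B -> Prop) :
  (forall a, exists b, P a b) -> exists f : A -> B, forall a, P a (f a).
Proof.
  intros H. exists (fun a => proj1_sig (constructive_indefinite_description _ (H a))).
  intro a. exact (proj2_sig (constructive_indefinite_description _ (H a))).
Qed.

Section Opens.
Context {T : Type} (op : set T -> Prop) (Htop : is_topology op).

Lemma op_ext U V : seteq U V -> op U -> op V.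
Proof. destruct Htop as (_&_&_&_&H). apply H. Qed.

Lemma op_finter {A : Type} (l : list A) (f : A -> set T) :
  (forall a, In a l -> op (f a)) -> op (fun x => forall a, In a l -> f a x).
Proof.
  destruct Htop as (HT&_&HI&_&_).
  induction l as [|a l IH]; intros H.
  - apply (op_ext (fun _ => True)); [|exact HT]. intro x; simpl; split; auto; tauto.
  - apply (op_ext (fun x => f a x /\ (forall b, In b l -> f b x))).
    + intro x; simpl; split.
      * intros [H1 H2] b [<-|Hb]; auto.
      * intros H1; split; auto.
    + apply HI; [apply H; simpl; auto|apply IH; intros; apply H; simpl; auto].
Qed.

Lemma op_funion {A : Type} (l : list A) (f : A -> set T) :
  (forall a, In a l -> op (f a)) -> op (fun x => exists a, In a l /\ f a x).
Proof.
  destruct Htop as (_&_&_&HU&_). intros H.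
  apply (op_ext (fun x => exists U, (exists a, In a l /\ U = f a) /\ U x)).
  - intro x; split.
    + intros [U [[a [Ha ->]] Hx]]; eauto.
    + intros [a [Ha Hx]]; eauto.
  - apply HU. intros U [a [Ha ->]]; auto.
Qed.

Lemma gdelta_ext A B : seteq A B -> Gdelta op A -> Gdelta op B.
Proof.
  intros He [U [HU HA]]. exists U; split; auto. intro x; rewrite <- HA. split; apply He.
Qed.

Lemma gdelta_cinter (G : nat -> set T) : (forall j, Gdelta op (G j)) ->
  Gdelta op (fun x => forall j, G j x).
Proof.
  intros H. apply my_choice in H as [U HU].
  exists (fun m => U (fst (of_nat m)) (snd (of_nat m))). split.
  - intro m. apply (HU _).
  - intro x; split.
    + intros Hx m. apply (proj2 (HU _) x). apply Hx.
    + intros Hx j. apply (proj2 (HU j) x). intro k.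
      specialize (Hx (to_nat (j,k))). rewrite cancel_of_to in Hx. exact Hx.
Qed.
End Opens.

Section Prod.
Context {T T' : Type} (op : set T -> Prop) (op' : set T' -> Prop)
  (Htop : is_topology op) (Htop' : is_topology op').

Definition trip := (set T * set T' * set (T * T'))%type.
Definition rU (r : trip) := fst (fst r).
Definition rV (r : trip) := snd (fst r).
Definition rW (r : trip) := snd r.

Definition rect_ok (Wc : set (T*T') -> Prop) (r : trip) :=
  op (rU r) /\ op' (rV r) /\ Wc (rW r) /\ forall a b, rU r a -> rV r b -> rW r (a,b).
Definition good Wc (K : set T) (L : list trip) :=
  (forall r, In r L -> rect_ok Wc r) /\ forall a, K a -> exists r, In r L /\ rU r a.
Definition interV (L : list trip) : set T' := fun y => forall r, In r L -> rV r y.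
Definition OL (L : list trip) : set T := fun x => exists r, In r L /\ rU r x.

Lemma lemA Wc K y : open_cover (prod_open op op') Wc -> compact_subset op K ->
  exists L, good Wc K L /\ interV L y.
Proof.
  intros [HWo HWc] HK.
  set (F := fun U => exists V W, op U /\ op' V /\ Wc W /\ V y /\
           forall a b, U a -> V b -> W (a,b)).
  destruct (HK F) as [l [Hl1 Hl2]].
  - intros U (V&W&H&_); exact H.
  - intros a Ha. destruct (HWc (a,y)) as [W [HW HWa]].
    destruct (HWo W HW _ HWa) as (U&V&HU&HV&HUa&HVy&HR).
    exists U; split; [exists V, W; simpl in *; auto|exact HUa].
  - assert (Hex : exists L, (forall r, In r L -> rect_ok Wc r /\ rV r y) /\
              forall U, In U l -> exists r, In r L /\ rU r = U).
    { clear Hl2. induction l as [|U l IH].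
      - exists []; split; [intros r []|intros U []].
      - destruct IH as [L [HL1 HL2]]. { intros; apply Hl1; simpl; auto. }
        destruct (Hl1 U (or_introl eq_refl)) as (V&W&HU&HV&HW&Hy&HR).
        exists ((U,V,W)::L); split.
        + intros r [<-|Hr]; [|apply HL1; auto].
          unfold rect_ok, rU, rV, rW; simpl; auto.
        + intros U' [<-|HU']; [exists (U,V,W); simpl; auto|].
          destruct (HL2 U' HU') as [r [Hr Hr']]; exists r; simpl; auto. }
    destruct Hex as [L [HL1 HL2]]. exists L; split; [split|].
    + intros r Hr; apply HL1; auto.
    + intros a Ha. destruct (Hl2 a Ha) as [U [HU HUa]].
      destruct (HL2 U HU) as [r [Hr <-]]. eauto.
    + intros r Hr; apply HL1; auto.
Qed.

Lemma interV_open Wc L : (forall r, In r L -> rect_ok Wc r) -> op' (interV L).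
Proof. intros H. apply (op_finter op' Htop' L rV). intros r Hr; apply H; auto. Qed.

Lemma OL_open Wc L : (forall r, In r L -> rect_ok Wc r) -> op (OL L).
Proof. intros H. apply (op_funion op Htop L rU). intros r Hr; apply H; auto. Qed.

Lemma lemB (K : set T) (W : nat -> (set (T*T') -> Prop)) (Z : Prop)
  (P : (nat -> Prop) -> Prop)
  (Pmono : forall S S' : nat -> Prop, (forall n, S n -> S' n) -> P S -> P S')
  (HWc : forall n, open_cover (prod_open op op') (W n))
  (HZ : Z -> forall n, W n = W 0)
  (Hy : forall C' : nat -> (set T' -> Prop), (forall n, open_cover op' (C' n)) ->
        (Z -> forall n, C' n = C' 0) ->
        exists sel : nat -> list (set T'), (forall n V, In V (sel n) -> C' n V) /\
          forall y, P (fun n => exists V, In V (sel n) /\ V y))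
  (HK : compact_subset op K) :
  exists G, Gdelta op G /\ (forall a, K a -> G a) /\
   exists R : nat -> list trip, (forall n r, In r (R n) -> W n (rW r)) /\
     forall x y, G x -> P (fun n => exists r, In r (R n) /\ rW r (x,y)).
Proof.
  set (C' := fun n (V : set T') => exists L, good (W n) K L /\ seteq V (interV L)).
  destruct (Hy C') as [sel [Hs1 Hs2]].
  - intro n; split.
    + intros V [L [[HL _] He]]. eapply op_ext; [exact Htop'| |apply (interV_open _ _ HL)].
      intro z; split; apply He.
    + intro y. destruct (lemA (W n) K y (HWc n) HK) as [L [HL Hy']].
      exists (interV L); split; [exists L; split; [auto|intro; tauto]|auto].
  - intros Hz n. unfold C'. rewrite (HZ Hz n). reflexivity.
  - assert (Hg : forall n, exists g : set T' -> list trip, forall V, C' n V ->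
                good (W n) K (g V) /\ seteq V (interV (g V))).
    { intro n. apply (my_choice (fun V L => C' n V -> good (W n) K L /\ seteq V (interV L))). intro V. destruct (classic (C' n V)) as [[L HL]|HN].
      - exists L; auto.
      - exists []; intro H; contradiction. }
    apply (my_choice (fun n g => forall V, C' n V -> good (W n) K (g V) /\ seteq V (interV (g V)))) in Hg as [g Hg].
    exists (fun x => forall n V, In V (sel n) -> OL (g n V) x). split; [|split].
    + exists (fun n x => forall V, In V (sel n) -> OL (g n V) x). split.
      * intro n. apply (op_finter op Htop (sel n) (fun V => OL (g n V))).
        intros V HV. apply (OL_open (W n)). apply (Hg n V (Hs1 n V HV)).
      * intro x; tauto.
    + intros a Ha n V HV. apply (proj2 (proj1 (Hg n V (Hs1 n V HV)))); auto.
    + exists (fun n => flat_map (g n) (sel n)). split.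
      * intros n r Hr. apply in_flat_map in Hr as [V [HV Hr]].
        apply (proj1 (proj1 (Hg n V (Hs1 n V HV))) r Hr).
      * intros x y Hx. refine (Pmono _ _ _ (Hs2 y)).
        intros n [V [HV HVy]].
        destruct (Hg n V (Hs1 n V HV)) as [[Hgood _] He].
        destruct (Hx n V HV) as [r [Hr HU]].
        exists r; split; [apply in_flat_map; eauto|].
        destruct (Hgood r Hr) as (_&_&_&HR). apply HR; auto.
        apply (proj1 (He y) HVy); auto.
Qed.

End Prod.

Lemma alster {T : Type} (op : set T -> Prop) (HS1 : S1_GK_GGamma op)
  (Gf : set T -> set T)
  (HG : forall K, compact_subset op K -> Gdelta op (Gf K) /\ forall a, K a -> Gf K a)
  (Hne : exists K, compact_subset op K) :
  exists Ks : nat -> set T, (forall m, compact_subset op (Ks m)) /\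
    forall x, exists m, Gf (Ks m) x.
Proof.
  set (D := fun A => exists K, compact_subset op K /\ seteq A (Gf K)).
  destruct (classic (exists A, D A /\ seteq A (fun _ => True))) as [[A [[K [HK HA]] HT]]|HN].
  - exists (fun _ => K); split; auto. intro x; exists 0. apply HA, HT; auto.
  - destruct (HS1 (fun _ => D)) as [B [HB [Hinf [_ Hcov]]]].
    + intro n; split; [|split]; auto.
      * intros U [K [HK HU]]. apply (gdelta_ext op) with (Gf K); [intro z; split; apply HU|].
        apply HG; auto.
      * intros K HK; exists (Gf K); split; [exists K; split; auto; intro; tauto|].
        apply HG; auto.
    + destruct (my_choice (fun n K => compact_subset op K /\ seteq (B n) (Gf K))) as [Ks HKs].
      { intro n. destruct (HB n) as [K HK]; eauto. }
      exists Ks; split; [intro m; apply HKs|].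
      intro x. destruct (Hcov _ (fun U H => H) Hinf x) as [U [[n Hn] HUx]].
      exists n. apply (proj2 (HKs n)), Hn, HUx.
Qed.

Section Final.
Context {T T' : Type} (op : set T -> Prop) (op' : set T' -> Prop)
  (Htop : is_topology op) (Htop' : is_topology op') (HS1 : S1_GK_GGamma op).

Lemma lemB' (K : set T) (W : nat -> (set (T*T') -> Prop)) (Z : Prop)
  (P : (nat -> Prop) -> Prop)
  (Pmono : forall S S' : nat -> Prop, (forall n, S n -> S' n) -> P S -> P S')
  (HWc : forall n, open_cover (prod_open op op') (W n))
  (HZ : Z -> forall n, W n = W 0)
  (Hy : forall C' : nat -> (set T' -> Prop), (forall n, open_cover op' (C' n)) ->
        (Z -> forall n, C' n = C' 0) ->
        exists sel : nat -> list (set T'), (forall n V, In V (sel n) -> C' n V) /\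
          forall y, P (fun n => exists V, In V (sel n) /\ V y))
  (HK : compact_subset op K) :
  exists G, Gdelta op G /\ (forall a, K a -> G a) /\
   exists R : nat -> nat -> list trip, (forall j n r, In r (R j n) -> W (n+j) (rW r)) /\
     forall j x y, G x -> P (fun n => exists r, In r (R j n) /\ rW r (x,y)).
Proof.
  destruct (my_choice (fun j (GR : set T * (nat -> list trip)) =>
     Gdelta op (fst GR) /\ (forall a, K a -> fst GR a) /\
     (forall n r, In r (snd GR n) -> W (n+j) (rW r)) /\
     forall x y, fst GR x -> P (fun n => exists r, In r (snd GR n) /\ rW r (x,y))))
   as [f Hf].
  { intro j. destruct (lemB op op' Htop Htop' K (fun n => W (n+j)) Z P Pmono)
      as [G [HG1 [HG2 [R [HR1 HR2]]]]]; auto.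
    - intros Hz n. simpl. rewrite (HZ Hz (n+j)), (HZ Hz j). reflexivity.
    - exists (G, R); simpl; auto. }
  exists (fun x => forall j, fst (f j) x). split; [|split].
  - apply gdelta_cinter. intro j; apply Hf.
  - intros a Ha j; apply Hf; auto.
  - exists (fun j => snd (f j)). split.
    + intros j n r Hr; apply (Hf j); auto.
    + intros j x y Hx. apply (Hf j); auto.
Qed.

Lemma lemC (W : nat -> (set (T*T') -> Prop)) (Z : Prop)
  (P : (nat -> Prop) -> Prop)
  (Pmono : forall S S' : nat -> Prop, (forall n, S n -> S' n) -> P S -> P S')
  (HWc : forall n, open_cover (prod_open op op') (W n))
  (HZ : Z -> forall n, W n = W 0)
  (Hy : forall C' : nat -> (set T' -> Prop), (forall n, open_cover op' (C' n)) ->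
        (Z -> forall n, C' n = C' 0) ->
        exists sel : nat -> list (set T'), (forall n V, In V (sel n) -> C' n V) /\
          forall y, P (fun n => exists V, In V (sel n) /\ V y)) :
  exists F : nat -> list (set (T*T')), (forall n A, In A (F n) -> W n A) /\
    forall p, exists j, P (fun m => exists A, In A (F (m+j)) /\ A p).
Proof.
  destruct (my_choice (fun K (GR : set T * (nat -> nat -> list trip)) =>
     compact_subset op K ->
     Gdelta op (fst GR) /\ (forall a, K a -> fst GR a) /\
     (forall j n r, In r (snd GR j n) -> W (n+j) (rW r)) /\
     forall j x y, fst GR x -> P (fun n => exists r, In r (snd GR j n) /\ rW r (x,y))))
   as [h Hh].
  { intro K. destruct (classic (compact_subset op K)) as [HK|HK].
    - destruct (lemB' K W Z P Pmono HWc HZ Hy HK) as [G [H1 [H2 [R [H3 H4]]]]].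
      exists (G, R); auto.
    - exists ((fun _ => True), (fun _ _ => [])); intro; contradiction. }
  destruct (alster op HS1 (fun K => fst (h K))) as [Ks [HKs Hcov]].
  - intros K HK; split; apply Hh; auto.
  - exists (fun _ => False). intros F _ _. exists []; split; [intros U []|intros x []].
  - exists (fun n => flat_map (fun j => map rW (snd (h (Ks j)) j (n-j))) (seq 0 (S n))).
    split.
    + intros n A HA. apply in_flat_map in HA as [j [Hj HA]].
      apply in_seq in Hj. apply in_map_iff in HA as [r [<- Hr]].
      pose proof (proj1 (proj2 (proj2 (Hh (Ks j) (HKs j)))) j (n-j) r Hr) as H.
      replace (n - j + j) with n in H by lia. exact H.
    + intros [x y]. destruct (Hcov x) as [j Hj]. exists j.
      refine (Pmono _ _ _ (proj2 (proj2 (proj2 (Hh (Ks j) (HKs j)))) j x y Hj)).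
      intros m [r [Hr Hxy]]. exists (rW r); split; auto.
      apply in_flat_map. exists j; split; [apply in_seq; lia|].
      replace (m + j - j) with m by lia. apply in_map; auto.
Qed.
End Final.

Theorem theorem4p12 (T : Type) (op : set T -> Prop)
  (Htop : is_topology op) (HT1 : T1_space op) (Hinf : infinite_type T)
  (HS1 : S1_GK_GGamma op) :
  productively (@Lindelof) op /\ productively (@Menger) op /\
  productively (@Hurewicz) op.
Proof.
  split; [|split]; intros T' op' Htop' _ Hinf' HQ.
  - intros C HC.
    destruct (lemC op op' Htop Htop' HS1 (fun _ => C) (forall n : nat, C = C)
       (fun S => exists n, S n)) as [F [HF1 HF2]];
      [intros S S' H [n Hn]; eauto|intro; exact HC|intros _ n; reflexivity| |].
    + intros C' HC' HZ. destruct (HQ (C' 0) (HC' 0)) as [f [Hf1 Hf2]].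
      exists (fun n => [f n]). split.
      * intros n V [<-|[]]. rewrite (HZ (fun _ => eq_refl) n); auto.
      * intro y. destruct (Hf2 y) as [n Hn]. exists n, (f n); simpl; auto.
    + destruct (Hinf []) as [x0 _]. destruct (Hinf' []) as [y0 _].
      destruct (proj2 HC (x0,y0)) as [A0 [HA0 _]].
      exists (fun k => nth (snd (of_nat k)) (F (fst (of_nat k))) A0). split.
      * intro k. destruct (nth_in_or_default (snd (of_nat k)) (F (fst (of_nat k))) A0) as [H|H].
        -- eapply HF1; eauto.
        -- rewrite H; auto.
      * intro p. destruct (HF2 p) as [j [m [A [HA HAp]]]].
        apply In_nth with (d := A0) in HA as [i [_ Hi]].
        exists (to_nat (m+j, i)). rewrite cancel_of_to; simpl. rewrite Hi; auto.
  - intros C HC.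
    destruct (lemC op op' Htop Htop' HS1 C False
       (fun S => exists n, S n)) as [F [HF1 HF2]]; [intros S S' H [n Hn]; eauto|exact HC|intros []| |].
    + intros C' HC' _. destruct (HQ C' HC') as [V [HV1 HV2]].
      exists V; split; auto.
    + exists F; split; auto. intro p. destruct (HF2 p) as [j [m [A HA]]].
      exists (m+j), A; auto.
  - intros C HC.
    destruct (lemC op op' Htop Htop' HS1 C False
       (fun S => exists N, forall n, N <= n -> S n)) as [F [HF1 HF2]];
      [intros S S' H [N HN]; eauto|exact HC|intros []| |].
    + intros C' HC' _. destruct (HQ C' HC') as [V [HV1 HV2]].
      exists V; split; auto.
    + exists F; split; auto. intro p. destruct (HF2 p) as [j [N HN]].
      exists (N+j). intros n Hn. destruct (HN (n-j)) as [A HA]; [lia|].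
      replace (n - j + j) with n in HA by lia. eauto.
Qed.
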